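(* Consider a GND instance, a reply $\varrho$-oracle ($\varrho\ge 1$), and a cost sharing mechanism $M$ whose induced GND game is $(\lambda,\mu)$-smooth with $\mu < 1/(\varrho \epsilon_1^2)$, where $\epsilon_1 = \frac{1+\epsilon}{1-\epsilon}$. If the approximate best response dynamic simulated in Alg-ABRD (with $M$ and the given $\epsilon$-cost shares) converges at some step $t \in [T]$, then the last strategy profile $p^t$ satisfies $$C(p^t) \leq \frac{\varrho \epsilon_1^2 \lambda}{1 - \varrho \epsilon_1^2 \mu} \cdot C^*.$$
   Context: GND instance: finite resource set $E$; requests $i \in [N]$, each with a reply collection $P_i \subseteq 2^E$ and a weight vector $w_i \in \mathbb{Z}_{\geq 1}^E$; constants $q \in \mathbb{Z}_{\ge 1}$, $\alpha_1,\dots,\alpha_q > 1$; for each $e$, $\sigma_e \geq 0$ and $\xi_{e,j} \geq 0$ (at least one $\xi_{e,j}>0$), and cost function $F_e(0)=0$, $F_e(l)=\sigma_e+\sum_j \xi_{e,j} l^{\alpha_j}$ for $l>0$. A strategy profile is $p=(p_1,\dots,p_N)\in P = P_1\times\dots\times P_N$; load $l_e^p=\sum_{i: e\in p_i} w_i(e)$; total cost $C(p)=\sum_e F_e(l_e^p)$; $C^*=\min_{p\in P} C(p)$. Notation $p_{-i}$ denotes $p$ without coordinate $i$ and $(p'_i,p_{-i})$ replaces the $i$-th coordinate by $p'_i$. A reply $\varrho$-oracle, given a reply collection $R$ and tolls $\tau:E\to\mathbb{R}_{>0}$, returns $r \in R$ with $\sum_{e\in r}\tau(e) \le \varrho \sum_{e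 \in r'}\tau(e)$ for all $r'\in R$. A cost sharing mechanism (CSM) $M=\{f_{i,e}\}$ assigns cost shares $f_{i,e}(p) \geq 0$ with $\sum_i f_{i,e}(p) = F_e(l_e^p)$; it is separable and uniform: $f_{i,e}(p)=0$ if $e \notin p_i$, and $f_{i,e}(p)$ depends only on $w_i(e)$ and the multiset of weights $w_{i'}(e)$ of the other players $i'$ with $e \in p_{i'}$. Player $i$'s individual cost is $C_i(p)=\sum_e f_{i,e}(p)$. The induced GND game (players $i$ with strategy spaces $P_i$ and costs $C_i$) is $(\lambda,\mu)$-smooth, for $\lambda>0$, $0<\mu<1$, if $\sum_i C_i(p'_i,p_{-i}) \le \lambda C(p') + \mu C(p)$ for all $p,p' \in P$. Alg-ABRD: fix small $\epsilon>0$ and $\epsilon_1=\frac{1+\epsilon}{1-\epsilon}$. Assume values $\widetilde f_{i,e}(p)$ are fixed for all $i,e,p$ with $(1-\epsilon) f_{i,e}(p) \le \widetilde f_{i,e}(p) \le (1+\epsilon) f_{i,e}(p)$, and set $\widetilde C_i(p)=\sum_e \widetilde f_{i,e}(p)$. Initial profile $p^0$: for each $i$, $p^0_i$ is the oracle's output on $P_i$ with tolls $\tau_i^0(e)=F_e(w_i(e))$. For $t=1,\dots,T$: for every $i$ compute $p'_i \in P_i$ with $\widetilde C_i(p'_i,p^{t-1}_{-i}) \le \varrho\, \widetilde C_i(p''_i,p^{t-1}_{-i})$ for all $p''_i\in P_i$ (obtained by calling the oracle with tolls $\tau(e)=\widetilde f_{i,e}$ of $i$ on $e$ when $i$ joins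 the current users of $e$), and let $\delta_i^t=\widetilde C_i(p^{t-1}) - \epsilon_1 \widetilde C_i(p'_i,p^{t-1}_{-i})$. If $\delta_i^t \le 0$ for all $i$, set $p^t=p^{t-1}$ and stop (the dynamic ''converges at step $t$''). Otherwise let $\Delta^t=\sum_i \delta_i^t$, pick $j$ with $\delta_j^t>0$ and $\delta_j^t \ge \Delta^t/N$, and set $p^t=(p'_j,p^{t-1}_{-j})$. Finally output the generated profile $p^{t^*}$ of minimum total cost $C$. *)

(* Defs.v *)
From HB Require Import structures.
From mathcomp Require Import all_boot all_order all_algebra.
From mathcomp Require Import reals exp.
Set Implicit Arguments. Unset Strict Implicit. Unset Printing Implicit Defensive.
Import Order.TTheory GRing.Theory Num.Theory.
Local Open Scope ring_scope.

Section GND.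
Variables (R : realType) (E : finType) (N : nat).

Definition profile := {ffun 'I_N -> {set E}}.

Definition feasible (P : 'I_N -> {set {set E}}) (p : profile) : Prop :=
  forall i, p i \in P i.

Definition upd (p : profile) (i : 'I_N) (r : {set E}) : profile :=
  [ffun k => if k == i then r else p k].

Definition load (w : 'I_N -> E -> nat) (p : profile) (e : E) : nat :=
  (\sum_(i < N | e \in p i) w i e)%N.

Definition costF (q : nat) (alpha : 'I_q -> R) (sigma : E -> R)
  (xi : E -> 'I_q -> R) (e : E) (l : nat) : R :=
  if l == 0%N then 0 else sigma e + \sum_(j < q) xi e j * powR (l%:R) (alpha j).

Definition totalC (F : E -> nat -> R) (w : 'I_N -> E -> nat) (p : profile) : R :=
  \sum_(e : E) F e (load w p e).

(* multiset (as a sequence) of weights on e of the players other than i using e *)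
Definition others_weights (w : 'I_N -> E -> nat) (p : profile) (i : 'I_N) (e : E)
  : seq nat := [seq w k e | k <- enum 'I_N & (k != i) && (e \in p k)].

Definition is_CSM (P : 'I_N -> {set {set E}}) (w : 'I_N -> E -> nat)
  (F : E -> nat -> R) (f : 'I_N -> E -> profile -> R) : Prop :=
  [/\ (forall p i e, feasible P p -> 0 <= f i e p),
      (forall p e, feasible P p -> \sum_(i < N) f i e p = F e (load w p e)),
      (forall p i e, feasible P p -> e \notin p i -> f i e p = 0) &
      (forall p p' i i' e, feasible P p -> feasible P p' ->
         e \in p i -> e \in p' i' -> w i e = w i' e ->
         perm_eq (others_weights w p i e) (others_weights w p' i' e) ->
         f i e p = f i' e p')].

Definition indC (f : 'I_N -> E -> profile -> R) (i : 'I_N) (p : profile) : R :=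
  \sum_(e : E) f i e p.

Definition smooth_game (P : 'I_N -> {set {set E}}) (w : 'I_N -> E -> nat)
  (F : E -> nat -> R) (f : 'I_N -> E -> profile -> R) (lam mu : R) : Prop :=
  [/\ 0 < lam, 0 < mu, mu < 1 &
      forall p p', feasible P p -> feasible P p' ->
        \sum_(i < N) indC f i (upd p i (p' i)) <= lam * totalC F w p' + mu * totalC F w p].

Definition reply_oracle (rho : R) (orc : {set {set E}} -> (E -> R) -> {set E}) : Prop :=
  forall (Rc : {set {set E}}) (tau : E -> R), Rc != set0 -> (forall e, 0 < tau e) ->
    orc Rc tau \in Rc /\
    forall r', r' \in Rc -> \sum_(e in orc Rc tau) tau e <= rho * \sum_(e in r') tau e.

Definition eps_shares (P : 'I_N -> {set {set E}}) (eps : R)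
  (f ft : 'I_N -> E -> profile -> R) : Prop :=
  forall i e p, feasible P p ->
    (1 - eps) * f i e p <= ft i e p /\ ft i e p <= (1 + eps) * f i e p.

Definition eps1 (eps : R) : R := (1 + eps) / (1 - eps).

Definition delta (ft : 'I_N -> E -> profile -> R) (eps : R) (pp : profile)
  (i : 'I_N) (r : {set E}) : R :=
  indC ft i pp - eps1 eps * indC ft i (upd pp i r).

(* A run of Alg-ABRD, with profiles ps 0, ps 1, ..., and responses resp s i
   (the p'_i computed at step s), which converges at step t in [1, T]. *)
Definition ABRD_run_converging_at (P : 'I_N -> {set {set E}}) (w : 'I_N -> E -> nat)
  (F : E -> nat -> R) (rho eps : R) (orc : {set {set E}} -> (E -> R) -> {set E})
  (ft : 'I_N -> E -> profile -> R) (T t : nat)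
  (ps : nat -> profile) (resp : nat -> 'I_N -> {set E}) : Prop :=
  [/\ (1 <= t <= T)%N,
      (forall i, ps 0%N i = orc (P i) (fun e => F e (w i e))),
      (forall s i, (1 <= s <= t)%N ->
         resp s i \in P i /\
         forall r'', r'' \in P i ->
           indC ft i (upd (ps s.-1) i (resp s i)) <= rho * indC ft i (upd (ps s.-1) i r'')),
      (forall s, (1 <= s < t)%N ->
         (exists i, 0 < delta ft eps (ps s.-1) i (resp s i)) /\
         exists j, [/\ 0 < delta ft eps (ps s.-1) j (resp s j),
           (\sum_(i < N) delta ft eps (ps s.-1) i (resp s i)) / N%:R
             <= delta ft eps (ps s.-1) j (resp s j) &
           ps s = upd (ps s.-1) j (resp s j)]) &
      ((forall i, delta ft eps (ps t.-1) i (resp t i) <= 0) /\ ps t = ps t.-1)].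

End GND.

(* Main.v *)
Require Import Defs.
From HB Require Import structures.
From mathcomp Require Import all_boot all_order all_algebra.
From mathcomp Require Import reals exp.
From mathcomp Require Import ring lra.
Import Order.TTheory GRing.Theory Num.Theory.
Local Open Scope ring_scope.

Theorem lemma5p1 (R : realType) (E : finType) (N : nat)
  (P : 'I_N -> {set {set E}}) (w : 'I_N -> E -> nat)
  (q : nat) (alpha : 'I_q -> R) (sigma : E -> R) (xi : E -> 'I_q -> R)
  (rho : R) (orc : {set {set E}} -> (E -> R) -> {set E})
  (f ft : 'I_N -> E -> profile E N -> R) (lam mu eps : R)
  (T t : nat) (ps : nat -> profile E N) (resp : nat -> 'I_N -> {set E}) :
  (forall i, P i != set0) ->
  (forall i e, (1 <= w i e)%N) ->
  (1 <= q)%N ->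
  (forall j, 1 < alpha j) ->
  (forall e, 0 <= sigma e) ->
  (forall e j, 0 <= xi e j) ->
  (forall e, exists j, 0 < xi e j) ->
  1 <= rho ->
  reply_oracle rho orc ->
  is_CSM P w (costF alpha sigma xi) f ->
  smooth_game P w (costF alpha sigma xi) f lam mu ->
  0 < eps -> eps < 1 ->
  mu < 1 / (rho * eps1 eps ^+ 2) ->
  eps_shares P eps f ft ->
  ABRD_run_converging_at P w (costF alpha sigma xi) rho eps orc ft T t ps resp ->
  forall pstar, feasible P pstar ->
    totalC (costF alpha sigma xi) w (ps t)
      <= (rho * eps1 eps ^+ 2 * lam) / (1 - rho * eps1 eps ^+ 2 * mu)
         * totalC (costF alpha sigma xi) w pstar.
Proof.
Proof.
move=> Pne w1 q1 alpha1 sig0 xi0 xipos rho1 orcP csm sm eps0 eps1lt mult epsS run pstar fpstar.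
case: csm => _ csum _ _.
case: sm => lam0 mu0 _ smP.
case: run => /andP[t1 tT] init resp_ok steps [stop pst].
set F := costF alpha sigma xi.
set p := ps t.-1.
have feas_upd : forall pp j r, feasible P pp -> r \in P j -> feasible P (upd pp j r).
  move=> pp j r fp rP k; rewrite /upd ffunE; case: eqP => [->|_] //.
have tau_pos : forall i e, 0 < F e (w i e).
  move=> i e; rewrite /F /costF.
  have := w1 i e; case: (w i e) => [//|l] _ /=.
  have [j xj] := xipos e.
  have hs : 0 < \sum_(j0 < q) xi e j0 * powR (l.+1)%:R (alpha j0).
    rewrite (bigD1 j) //=.
    have ht : 0 < xi e j * powR (l.+1)%:R (alpha j).
      by apply: mulr_gt0 => //; apply: powR_gt0; rewrite ltr0n.
    apply: (lt_le_trans ht); rewrite lerDl.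
    by apply: sumr_ge0 => k _; apply: mulr_ge0 => //; apply: powR_ge0.
  by apply: (lt_le_trans hs); rewrite lerDr.
have feas_s : forall s, (s < t)%N -> feasible P (ps s).
  elim=> [_|s IH st] i.
    by rewrite init; case: (orcP (P i) (fun e => F e (w i e)) (Pne i) (tau_pos i)).
  have [_ [j [_ _ ->]]] := steps s.+1 (st).
  apply: feas_upd; first by apply: IH; apply: ltnW.
  by case: (resp_ok s.+1 j); rewrite ?st ?andbT //; apply: ltnW.
have fp : feasible P p by apply: feas_s; rewrite prednK // ltnSn.
set K := rho * eps1 eps ^+ 2.
have c0 : 0 < 1 - eps by rewrite subr_gt0.
have e10 : 0 < eps1 eps by rewrite /eps1 divr_gt0 // ltr_wpDr // ltW.
have rho0 : 0 < rho by apply: lt_le_trans rho1.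
have K0 : 0 < K by rewrite /K mulr_gt0 // exprn_gt0.
have key : forall i, indC f i p <= K * indC f i (upd p i (pstar i)).
  move=> i.
  set Z := indC f i (upd p i (pstar i)).
  have fu := feas_upd p i (pstar i) fp (fpstar i).
  have h1 : (1 - eps) * indC f i p <= indC ft i p.
    by rewrite /indC mulr_sumr; apply: ler_sum => e _; case: (epsS i e p fp).
  have h4 : indC ft i (upd p i (pstar i)) <= (1 + eps) * Z.
    by rewrite /Z /indC mulr_sumr; apply: ler_sum => e _; case: (epsS i e _ fu).
  have h2 : indC ft i p <= eps1 eps * indC ft i (upd p i (resp t i)).
    by have := stop i; rewrite /delta subr_le0.
  have h3 : indC ft i (upd p i (resp t i)) <= rho * indC ft i (upd p i (pstar i)).
    by case: (resp_ok t i); rewrite ?t1 ?leqnn // => _; apply; apply: fpstar.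
  have he : 1 + eps = eps1 eps * (1 - eps) by rewrite /eps1 divfK // gt_eqF.
  rewrite -(ler_pM2l c0).
  apply: (le_trans h1); apply: (le_trans h2).
  have -> : (1 - eps) * (K * Z) = eps1 eps * (rho * ((1 + eps) * Z)).
    by rewrite he /K; ring.
  rewrite ler_pM2l //; apply: (le_trans h3).
  by rewrite ler_pM2l.
have Csum : totalC F w p = \sum_(i < N) indC f i p.
  rewrite /totalC /indC exchange_big /=; apply: eq_bigr => e _.
  by rewrite csum.
have main : totalC F w p <= K * (lam * totalC F w pstar + mu * totalC F w p).
  rewrite {1}Csum; apply: (le_trans (ler_sum _ (fun i _ => key i))).
  by rewrite -mulr_sumr ler_pM2l //; apply: smP.
have Kmu : K * mu < 1.
  by move: mult; rewrite -/K mul1r -ltr_pdivlMl // mulr1.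
rewrite pst -/p -/K.
rewrite mulrAC ler_pdivlMr ?subr_gt0 //.
rewrite mulrBr mulr1 lerBlDr.
move: main; rewrite mulrDr; set A := totalC F w p.
move=> h; apply: (le_trans h); set B := totalC _ _ pstar.
rewrite [A * _]mulrC !mulrA; exact: lexx.
Qed.
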